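(* Let $\Gamma$ be a finite connected $4$-valent graph whose automorphism group is transitive on $2$-arcs, and suppose the girth of $\Gamma$ is at most $4$. Then one of the following holds: (1) $\Gamma$ has girth $3$ and $\Gamma\cong K_5$; (2) $\Gamma$ has girth $4$ and $\Gamma\cong K_{4,4}\cong C(4,1)$; (3) $\Gamma$ has girth $4$ and $\Gamma$ is isomorphic to $K_{5,5}-5K_2$, to $Q_4$, or to $BCH$.
   Context: A $2$-arc is a sequence $(v_0,v_1,v_2)$ of vertices with $v_0\sim v_1\sim v_2$ and $v_0\ne v_2$. $K_{5,5}-5K_2$ is the complete bipartite graph $K_{5,5}$ with a perfect matching removed. $Q_4$ is the $4$-dimensional hypercube, i.e. the Cayley graph of $\mathbb{Z}_2^4$ with respect to the four standard basis vectors. $BCH$ (bipartite complement of the Heawood graph) has as vertices the $7$ points and $7$ lines of the Fano plane, a point $p$ being adjacent to a line $L$ iff $p\notin L$. $C(4,1)$ is the lexicographic product of a $4$-cycle with the edgeless graph on $2$ vertices. *)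

(* Defs.v *)
(* Simple graphs are symmetric irreflexive relations on a finType. *)
From mathcomp Require Import all_boot fingroup perm.
Set Implicit Arguments. Unset Strict Implicit. Unset Printing Implicit Defensive.

Section Graphs.
Variable T : finType.
Variable e : rel T.

Definition regular (k : nat) := forall x : T, #|[set y | e x y]| = k.

Definition gconnected := forall x y : T, connect e x y.

Definition is_aut (s : {perm T}) := forall x y, e (s x) (s y) = e x y.

Definition two_arc (a b c : T) := [/\ e a b, e b c & a != c].

Definition two_arc_transitive :=
  forall a b c a' b' c', two_arc a b c -> two_arc a' b' c' ->
    exists s : {perm T}, [/\ is_aut s, s a = a', s b = b' & s c = c'].

Definition has_cycle (k : nat) :=
  3 <= k /\ exists s : seq T, [/\ size s = k, uniq s & path.cycle e s].

Definition girth (g : nat) :=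
  has_cycle g /\ forall k, k < g -> ~ has_cycle k.
End Graphs.

Definition isomorphic (T T' : finType) (e : rel T) (e' : rel T') :=
  exists f : T -> T', bijective f /\ forall x y, e' (f x) (f y) = e x y.

Definition K5_rel : rel 'I_5 := fun x y => x != y.

Definition K44_rel : rel (bool * 'I_4) := fun x y => x.1 != y.1.

(* C(4,1) = C_4[2K_1]: lexicographic product of the 4-cycle with the empty graph on 2 vertices *)
Definition C41_rel : rel ('I_4 * 'I_2) :=
  fun x y => (y.1 == (x.1 + 1) %% 4 :> nat) || (x.1 == (y.1 + 1) %% 4 :> nat).

Definition K55m_rel : rel (bool * 'I_5) := fun x y => (x.1 != y.1) && (x.2 != y.2).

Definition Q4_rel : rel {ffun 'I_4 -> bool} :=
  fun x y => #|[set i | x i != y i]| == 1.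

(* Fano plane: points 'I_7, lines 'I_7, line l = {l, l+1, l+3} mod 7 *)
Definition fano_inc (p l : 'I_7) : bool := ((p + 7 - l) %% 7) \in [:: 0; 1; 3].

(* bipartite complement of the Heawood graph: (false,p) point, (true,l) line;
   p ~ l iff p is not on l *)
Definition BCH_rel : rel (bool * 'I_7) :=
  fun x y => (x.1 != y.1) &&
    ~~ (if x.1 then fano_inc y.2 x.2 else fano_inc x.2 y.2).

(* Main.v *)
Require Import Defs.
From mathcomp Require Import all_boot fingroup perm.
Set Implicit Arguments. Unset Strict Implicit. Unset Printing Implicit Defensive.


Definition hreln (E : seq (nat * nat)) (i j : nat) := ((i, j) \in E) || ((j, i) \in E).
Definition hrel n (E : seq (nat * nat)) : rel 'I_n := fun x y => hreln E x y.

Lemma iso_trans (T1 T2 T3 : finType) (e1 : rel T1) (e2 : rel T2) (e3 : rel T3) :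
  isomorphic e1 e2 -> isomorphic e2 e3 -> isomorphic e1 e3.
Proof.
move=> [f [bf Hf]] [g [bg Hg]]; exists (g \o f); split; first exact: bij_comp.
by move=> x y /=; rewrite Hg Hf.
Qed.

Lemma iso_check_inj n (E : seq (nat * nat)) (T' : finType) (e' : rel T') (d : T') (L : seq T') :
  #|T'| = n -> injective (fun x : 'I_n => nth d L x) ->
  all (fun i => all (fun j => e' (nth d L i) (nth d L j) == hreln E i j) (iota 0 n)) (iota 0 n) ->
  isomorphic (@hrel n E) e'.
Proof.
move=> cT inj /allP H.
exists (fun x : 'I_n => nth d L x); split.
  by apply: inj_card_bij => //; rewrite card_ord cT.
move=> x y; apply/eqP.
have mI (z : 'I_n) : (z : nat) \in iota 0 n by rewrite mem_iota /= add0n ltn_ord.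
by have /allP := H x (mI x); apply; apply: mI.
Qed.

Lemma iso_check n (E : seq (nat * nat)) (T' : finType) (e' : rel T') (d : T') (L : seq T') :
  #|T'| = n -> (size L == n) && uniq L ->
  all (fun i => all (fun j => e' (nth d L i) (nth d L j) == hreln E i j) (iota 0 n)) (iota 0 n) ->
  isomorphic (@hrel n E) e'.
Proof.
move=> cT /andP[/eqP sL uL]; apply: iso_check_inj => // x y /eqP.
by rewrite nth_uniq ?sL // => /eqP /val_inj.
Qed.

Definition EQ4 := [:: (0, 1); (0, 2); (0, 3); (0, 4); (1, 5); (2, 5); (1, 6); (3, 6); (1, 7); (4, 7); (2, 8); (3, 8); (2, 9); (4, 9); (3, 10); (4, 10); (8, 11); (9, 11); (10, 11); (11, 15); (6, 12); (7, 12); (10, 12); (12, 15); (5, 13); (7, 13); (9, 13); (13, 15); (5, 14); (6, 14); (8, 14); (14, 15)].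
Definition EBCH := [:: (0, 1); (0, 2); (0, 3); (0, 4); (1, 5); (2, 5); (1, 6); (3, 6); (1, 7); (4, 7); (2, 8); (3, 8); (2, 9); (4, 9); (3, 10); (4, 10); (6, 11); (7, 11); (8, 11); (9, 11); (5, 12); (7, 12); (8, 12); (10, 12); (5, 13); (6, 13); (9, 13); (10, 13)].
Definition EK55 := [:: (0, 1); (0, 2); (0, 3); (0, 4); (1, 6); (1, 7); (1, 8); (2, 5); (2, 7); (2, 8); (3, 5); (3, 6); (3, 8); (4, 5); (4, 6); (4, 7); (5, 9); (6, 9); (7, 9); (8, 9)].
Definition EK44 := [:: (0, 4); (0, 5); (0, 6); (0, 7); (1, 4); (1, 5); (1, 6); (1, 7); (2, 4); (2, 5); (2, 6); (2, 7); (3, 4); (3, 5); (3, 6); (3, 7)].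
Definition EK5 := [:: (0,1);(0,2);(0,3);(0,4);(1,2);(1,3);(1,4);(2,3);(2,4);(3,4)].

Definition O n m (H : m < n) : 'I_n := Ordinal H.
Notation "m '#' n" := (@O n m erefl) (at level 2, format "m # n").

Lemma isoBCH : isomorphic (@hrel 14 EBCH) BCH_rel.
Proof.
apply: (@iso_check 14 EBCH _ BCH_rel (false, 0#7) [:: (false,0#7); (true,1#7); (true,2#7); (true,3#7); (true,5#7); (false,6#7); (false,5#7); (false,3#7); (false,1#7); (false,4#7); (false,2#7); (true,6#7); (true,4#7); (true,0#7)]).
- by rewrite card_prod card_bool card_ord.
- by vm_compute.
- by vm_compute.
Qed.

Lemma isoK55 : isomorphic (@hrel 10 EK55) K55m_rel.
Proof.
apply: (@iso_check 10 EK55 _ K55m_rel (false, 0#5) [:: (false,0#5); (true,1#5); (true,2#5); (true,3#5); (true,4#5); (false,1#5); (false,2#5); (false,3#5); (false,4#5); (true,0#5)]).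
- by rewrite card_prod card_bool card_ord.
- by vm_compute.
- by vm_compute.
Qed.

Lemma isoK44 : isomorphic (@hrel 8 EK44) K44_rel.
Proof.
apply: (@iso_check 8 EK44 _ K44_rel (false, 0#4) [:: (false,0#4); (false,1#4); (false,2#4); (false,3#4); (true,0#4); (true,1#4); (true,2#4); (true,3#4)]).
- by rewrite card_prod card_bool card_ord.
- by vm_compute.
- by vm_compute.
Qed.

Lemma isoC41 : isomorphic (@hrel 8 EK44) C41_rel.
Proof.
apply: (@iso_check 8 EK44 _ C41_rel (0#4, 0#2) [:: (0#4,0#2); (0#4,1#2); (2#4,0#2); (2#4,1#2); (1#4,0#2); (1#4,1#2); (3#4,0#2); (3#4,1#2)]).
- by rewrite card_prod !card_ord.
- by vm_compute.
- by vm_compute.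
Qed.

Lemma isoK5 : isomorphic (@hrel 5 EK5) K5_rel.
Proof.
apply: (@iso_check 5 EK5 _ K5_rel (0#5) [:: 0#5; 1#5; 2#5; 3#5; 4#5]).
- by rewrite card_ord.
- by vm_compute.
- by vm_compute.
Qed.


Definition bits (k : nat) : {ffun 'I_4 -> bool} := [ffun i : 'I_4 => odd (k %/ 2 ^ i)].
Definition code (u : {ffun 'I_4 -> bool}) : nat :=
  u (0#4) + 2 * u (1#4) + 4 * u (2#4) + 8 * u (3#4).

Lemma Q4_relE x y : Q4_rel x y =
  ((x (0#4) != y (0#4)) + (x (1#4) != y (1#4)) + (x (2#4) != y (2#4)) + (x (3#4) != y (3#4)) == 1).
Proof.
rewrite /Q4_rel -sum1_card big_mkcond /= !big_ord_recl big_ord0 !inE addn0.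
have -> : lift ord0 ord0 = 1#4 by apply: val_inj.
have -> : lift ord0 (lift ord0 ord0) = 2#4 by apply: val_inj.
have -> : lift ord0 (lift ord0 (lift ord0 (ord0 : 'I_1))) = 3#4 by apply: val_inj.
have -> : ord0 = 0#4 by apply: val_inj.
by case: (_ != _); case: (_ != _); case: (_ != _); case: (_ != _).
Qed.

Lemma nat_check (P : nat -> nat -> bool) n :
  all (fun a => all (fun b => P a b) (iota 0 n)) (iota 0 n) -> forall a b, a < n -> b < n -> P a b.
Proof.
move=> /allP H a b ha hb.
have Ha : a \in iota 0 n by rewrite mem_iota.
have Hb : b \in iota 0 n by rewrite mem_iota.
by have /allP := H a Ha; apply.
Qed.

Definition Q4list := [:: 0; 1; 2; 4; 8; 3; 5; 9; 6; 10; 12; 14; 13; 11; 7; 15].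

Lemma isoQ4 : isomorphic (@hrel 16 EQ4) Q4_rel.
Proof.
apply: (@iso_check_inj 16 EQ4 _ Q4_rel (bits 0) (map bits Q4list)).
- by rewrite card_ffun card_bool card_ord.
- move=> x y /= H.
  have: code (nth (bits 0) [seq bits i | i <- Q4list] x) = code (nth (bits 0) [seq bits i | i <- Q4list] y) by rewrite H.
  rewrite !(nth_map 0) ?size_map ?ltn_ord // /code !ffunE /=.
  move: (ltn_ord x) (ltn_ord y) => /= hx hy E; apply: val_inj => /=.
  move: E; move: (nat_of_ord x) (nat_of_ord y) hx hy.
  move=> a b ha hb.
  pose F a := odd (nth 0 Q4list a %/ 2 ^ 0) + 2 * odd (nth 0 Q4list a %/ 2 ^ 1) +
    4 * odd (nth 0 Q4list a %/ 2 ^ 2) + 8 * odd (nth 0 Q4list a %/ 2 ^ 3).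
  have := @nat_check (fun a b => (F a == F b) ==> (a == b)) 16 (erefl true) _ _ ha hb.
  by rewrite /F => /implyP H1 /eqP/H1/eqP.
- apply/allP => i; rewrite mem_iota add0n => hi; apply/allP => j; rewrite mem_iota add0n => hj.
  rewrite !(nth_map 0) // Q4_relE !ffunE.
  move: i j hi hj; apply: nat_check.
  by vm_compute.
Qed.


Lemma ord4P (P : 'I_4 -> Prop) : P (0#4) -> P (1#4) -> P (2#4) -> P (3#4) -> forall i, P i.
Proof.
move=> P0 P1 P2 P3 [[|[|[|[|//]]]] H].
- by have -> : Ordinal H = 0#4 by apply: val_inj.
- by have -> : Ordinal H = 1#4 by apply: val_inj.
- by have -> : Ordinal H = 2#4 by apply: val_inj.
- by have -> : Ordinal H = 3#4 by apply: val_inj.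
Qed.

Definition oth (k m : 'I_4) : 'I_4 :=
  if (k != 0#4) && (m != 0#4) then 0#4 else if (k != 1#4) && (m != 1#4) then 1#4 else 2#4.
Lemma othP k m : (oth k m != k) && (oth k m != m).
Proof. by move: k m; apply: ord4P; apply: ord4P. Qed.

Lemma card_ord_pred n (P : nat -> bool) : #|[set x : 'I_n | P x]| = count P (iota 0 n).
Proof.
rewrite cardsE cardE size_filter -val_enum_ord count_map -enumT.
by [].
Qed.

Section G.
Variables (T : finType) (e : rel T).
Hypotheses (e_sym : symmetric e) (e_irr : irreflexive e) (e_conn : gconnected e)
  (e_val : regular e 4).

Notation N x := [set y | e x y].

Lemma iso_from (H : finType) (h : rel H) (x0 : H) (f : H -> T) :
  (forall x, #|[set x' | h x x']| = 4) -> (forall x y, h x y -> e (f x) (f y)) -> injective f ->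
  isomorphic e h.
Proof.
move=> hreg hedge finj.
have Nim x : f @: [set x' | h x x'] = N (f x).
  apply/eqP; rewrite eqEcard card_imset // hreg e_val leqnn andbT.
  by apply/subsetP => t /imsetP[x' ]; rewrite inE => /hedge ? ->; rewrite inE.
have hE x x' : h x x' = e (f x) (f x').
  have : (f x' \in N (f x)) = e (f x) (f x') by rewrite inE.
  by rewrite -Nim mem_imset // inE => <-.
have surj t : exists x, f x = t.
  have : connect e (f x0) t by apply: e_conn.
  case/connectP => p; elim: p (x0) => [|v p IH] x /=; first by move=> _ ->; exists x.
  case/andP => exv pv lt; have : v \in N (f x) by rewrite inE.
  by rewrite -Nim => /imsetP[x' _ vx]; apply: (IH x'); rewrite -vx.
pose g t := odflt x0 [pick x | f x == t].
have fg t : f (g t) = t.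
  rewrite /g; case: pickP => [x /eqP //|]; case: (surj t) => x fx /(_ x).
  by rewrite fx eqxx.
exists g; split; first by exists f => [t|x]; rewrite ?fg //; apply: finj; rewrite fg.
by move=> t t'; rewrite hE !fg.
Qed.

Lemma iso_list n E (y0 : T) (L : seq T) :
  all (fun i => count (hreln E i) (iota 0 n.+1) == 4) (iota 0 n.+1) ->
  size L == n.+1 -> uniq L -> all (fun p => e (nth y0 L p.1) (nth y0 L p.2)) E ->
  isomorphic e (@hrel n.+1 E).
Proof.
move=> /allP reg /eqP sL uL /allP ed.
apply: (@iso_from _ _ ord0 (fun x : 'I_n.+1 => nth y0 L x)).
- move=> x; rewrite card_ord_pred; apply/eqP/reg.
  by rewrite mem_iota add0n ltn_ord.
- move=> x y /orP[] /ed //= exy; by rewrite e_sym.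
- move=> x y /eqP; rewrite nth_uniq ?sL // => /eqP; exact: val_inj.
Qed.

Lemma nbrs v : exists n : 'I_4 -> T, injective n /\ (forall x, e v x -> exists i, x = n i)
  /\ (forall i, e v (n i)).
Proof.
have cS : #|N v| = 4 := e_val v.
exists (fun i => enum_val (cast_ord (esym cS) i)); split; last split.
- by move=> i j /enum_val_inj /cast_ord_inj.
- move=> x xv; have xS : x \in N v by rewrite inE.
  exists (cast_ord cS (enum_rank_in xS x)).
  by rewrite cast_ordK enum_rankK_in.
- by move=> i; have := enum_valP (cast_ord (esym cS) i); rewrite inE.
Qed.


Hypothesis e_2at : two_arc_transitive e.

Lemma aut_N (s : {perm T}) x : is_aut e s -> N (s x) = s @: N x.
Proof.
move=> Hs; apply/setP => t; rewrite inE -(permKV s t) Hs mem_imset ?inE //.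
exact: perm_inj.
Qed.

Lemma ccount x u z x' u' z' : two_arc e x u z -> two_arc e x' u' z' ->
  #|N x' :&: N z'| = #|N x :&: N z|.
Proof.
move=> H H'; have [s [Hs <- _ <-]] := e_2at H H'.
rewrite !aut_N // -imsetI ?card_imset //; first exact: perm_inj.
by move=> ? ? _ _; apply: perm_inj.
Qed.

Section Girth4.
Hypothesis notri : forall x y z, e x y -> e y z -> e x z -> False.
Variable c : nat.
Hypothesis cdef : forall x u z, two_arc e x u z -> #|N x :&: N z| = c.

Lemma common_le x u z s : e x u -> e u z -> x != z -> uniq s ->
  (forall v, v \in s -> e x v && e z v) -> size s <= c.
Proof.
move=> xu uz xz us Hs; rewrite -(cdef (And3 xu uz xz)) -(card_uniqP us).
by apply: subset_leq_card; apply/subsetP => v /Hs /andP[? ?]; rewrite !inE; apply/andP.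
Qed.

Lemma common_other x u z s : e x u -> e u z -> x != z -> size s < c ->
  exists v, [/\ v \notin s, e x v & e z v].
Proof.
move=> xu uz xz ss.
have : ~~ (N x :&: N z \subset mem s).
  apply/negP => /subset_leq_card; rewrite (cdef (And3 xu uz xz)) => H.
  by move: (leq_trans H (card_size s)); rewrite leqNgt ss.
by case/subsetPn => v; rewrite !inE => /andP[? ?] ?; exists v.
Qed.

Lemma neq_of_e x z : e x z -> x != z.
Proof. by apply: contraTneq => ->; rewrite e_irr. Qed.

Lemma notri' x u z : e x u -> e u z -> e x z = false.
Proof. by move=> xu uz; apply/negP => /(notri xu uz). Qed.

Lemma nbr_full v (s : seq T) t : uniq s -> size s = 4 -> (forall x, x \in s -> e v x) ->
  e v t -> t \in s.
Proof.
move=> us ss Hs vt.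
have E : [set x in s] = N v.
  apply/eqP; rewrite eqEcard e_val cardsE (card_uniqP us) ss leqnn andbT.
  by apply/subsetP => x; rewrite !inE => /Hs.
have : t \in N v by rewrite inE.
by rewrite -E inE.
Qed.

Lemma nbr_other v (s : seq T) : size s < 4 -> exists t, e v t /\ t \notin s.
Proof.
move=> ss; have : ~~ (N v \subset mem s).
  apply/negP => /subset_leq_card; rewrite e_val => H.
  by move: (leq_trans H (card_size s)); rewrite leqNgt ss.
by case/subsetPn => t; rewrite inE => ? ?; exists t.
Qed.

Section C4.
Hypothesis c4 : c = 4.
Variables (y : T) (a : 'I_4 -> T).
Hypotheses (a_inj : injective a) (a_adj : forall i, e y (a i)).
Variable b : 'I_4 -> T.
Hypotheses (b_inj : injective b) (b_adj : forall i, e (a (0#4)) (b i)).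

Lemma c4_N i : N (a i) = N (a (0#4)).
Proof.
have [->//|ne] := eqVneq i (0#4).
have arc : two_arc e (a i) y (a (0#4)).
  by split; [rewrite e_sym | | rewrite (inj_eq a_inj)].
have cI := cdef arc; rewrite c4 in cI.
have e1 : N (a i) :&: N (a (0#4)) = N (a i).
  apply/eqP; rewrite eqEcard subsetIl cI e_val; done.
have e2 : N (a i) :&: N (a (0#4)) = N (a (0#4)).
  apply/eqP; rewrite eqEcard subsetIr cI e_val; done.
by rewrite -e1 e2.
Qed.

Lemma c4_ab i k : e (a i) (b k).
Proof.
have : b k \in N (a (0#4)) by rewrite inE.
by rewrite -(c4_N i) inE.
Qed.

Lemma c4_neq i k : a i != b k.
Proof. exact: neq_of_e (c4_ab i k). Qed.

Lemma c4_iso : isomorphic e (@hrel 8 EK44).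
Proof.
apply: (@iso_list 7 EK44 y [:: a (0#4); a (1#4); a (2#4); a (3#4); b (0#4); b (1#4); b (2#4); b (3#4)]).
- by vm_compute.
- by [].
- rewrite /= !inE !negb_or; repeat (apply/andP; split);
  solve [ by [] | by rewrite (inj_eq a_inj) | by rewrite (inj_eq b_inj) | by apply: c4_neq | by rewrite eq_sym; apply: c4_neq ].
- by rewrite /= !c4_ab.
Qed.
End C4.

Section C3.
Hypothesis c3 : c = 3.
Variables (y : T) (a : 'I_4 -> T).
Hypotheses (a_inj : injective a) (a_adj : forall i, e y (a i))
  (a_comp : forall x, e y x -> exists i, x = a i).

Lemma arcA i j : i != j -> two_arc e (a i) y (a j).
Proof. by move=> ij; split; [rewrite e_sym | | rewrite (inj_eq a_inj)]. Qed.

Lemma c3_tri i j l : i != j -> i != l -> j != l ->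
  exists t, [/\ t != y, e (a i) t, e (a j) t & e (a l) t].
Proof.
move=> ij il jl.
have cX := cdef (arcA ij); have cY := cdef (arcA il); rewrite c3 in cX cY.
set X := N (a i) :&: N (a j) in cX *; set Y := N (a i) :&: N (a l) in cY *.
have sub : X :|: Y \subset N (a i) by rewrite subUset !subsetIl.
have := subset_leq_card sub; rewrite cardsU cX cY e_val => H.
have H2 : 1 < #|X :&: Y|.
  by move: H; case: #|X :&: Y| => [|[|k]].
case/card_gt1P: H2 => u [v [uXY vXY uv]].
have [t [tXY ty]] : exists t, t \in X :&: Y /\ t != y.
  by case: (eqVneq u y) => [uy|uy]; [exists v; rewrite -uy eq_sym | exists u].
by exists t; move: tXY; rewrite !inE => /andP[/andP[-> ->] /andP[_ ->]].
Qed.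

Definition z3 k := odflt y [pick t | (t != y) && [forall i, (i != k) ==> e (a i) t]].

Lemma z3_ex k : exists t, (t != y) && [forall i, (i != k) ==> e (a i) t].
Proof.
move: k; apply: ord4P.
- have [t [ty H1 H2 H3]] := @c3_tri (1#4) (2#4) (3#4) isT isT isT.
  exists t; rewrite ty /=; apply/forallP; apply: ord4P; by rewrite ?H1 ?H2 ?H3 ?implybT.
- have [t [ty H1 H2 H3]] := @c3_tri (0#4) (2#4) (3#4) isT isT isT.
  exists t; rewrite ty /=; apply/forallP; apply: ord4P; by rewrite ?H1 ?H2 ?H3 ?implybT.
- have [t [ty H1 H2 H3]] := @c3_tri (0#4) (1#4) (3#4) isT isT isT.
  exists t; rewrite ty /=; apply/forallP; apply: ord4P; by rewrite ?H1 ?H2 ?H3 ?implybT.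
- have [t [ty H1 H2 H3]] := @c3_tri (0#4) (1#4) (2#4) isT isT isT.
  exists t; rewrite ty /=; apply/forallP; apply: ord4P; by rewrite ?H1 ?H2 ?H3 ?implybT.
Qed.

Lemma z3P k : z3 k != y /\ forall i, i != k -> e (a i) (z3 k).
Proof.
rewrite /z3; case: pickP => [t /andP[ty /forallP H] | H].
  by split=> // i ik; exact: (implyP (H i) ik).
by case: (z3_ex k) => t; rewrite (H t).
Qed.

Lemma z3adj i k : i != k -> e (a i) (z3 k). Proof. exact: (z3P k).2. Qed.

Lemma c3_no4 t : t != y -> (forall i, e (a i) t) -> False.
Proof.
move=> ty H.
have ta : e t (a (0#4)) by rewrite e_sym H.
have ay : e (a (0#4)) y by rewrite e_sym a_adj.
have := @common_le t (a (0#4)) y [:: a (0#4); a (1#4); a (2#4); a (3#4)] ta ay ty.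
rewrite c3 => H1.
suff : 4 <= 3 by [].
apply: H1.
  by rewrite /= !inE !(inj_eq a_inj).
move=> v; rewrite !inE => /or4P [] /eqP ->; by rewrite e_sym H a_adj.
Qed.

Lemma z3_nak k : e (a k) (z3 k) = false.
Proof.
apply/negP => H; apply: (c3_no4 (z3P k).1) => i.
by case: (eqVneq i k) => [->//|]; exact: (z3P k).2.
Qed.

Lemma z3_inj : injective z3.
Proof.
move=> k m E; apply/eqP/negP => /negP km.
apply: (c3_no4 (z3P k).1) => i.
case: (eqVneq i k) => [->|ik]; last exact: (z3P k).2.
by rewrite E; apply: (z3P m).2.
Qed.

Lemma yz3 k : e y (z3 k) = false.
Proof.
have /andP[h1 _] := othP k k.
exact: notri' (a_adj (oth k k)) ((z3P k).2 _ h1).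
Qed.

Lemma yz3_neq k : y != z3 k. Proof. by rewrite eq_sym (z3P k).1. Qed.

Lemma az3_neq m k : a m != z3 k.
Proof. by apply/eqP => E; have := a_adj m; rewrite E yz3. Qed.

Lemma zz3 k m : e (z3 k) (z3 m) = false.
Proof.
have /andP[h1 h2] := othP k m.
by apply: notri' _ ((z3P m).2 _ h2); rewrite e_sym; apply: (z3P k).2.
Qed.

Lemma a3_comp i t : e (a i) t -> t = y \/ exists m, t = z3 m.
Proof.
move: i t; apply: ord4P => t H.
- have : t \in [:: y; z3 (1#4); z3 (2#4); z3 (3#4)].
    apply: (nbr_full (v := a (0#4))) => //.
      by rewrite /= !inE !negb_or !yz3_neq !(inj_eq z3_inj).
    move=> x; rewrite !inE => /or4P [] /eqP ->; by rewrite ?z3adj // e_sym a_adj.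
  by rewrite !inE => /or4P [] /eqP ->; [left | right; eexists ..].
- have : t \in [:: y; z3 (0#4); z3 (2#4); z3 (3#4)].
    apply: (nbr_full (v := a (1#4))) => //.
      by rewrite /= !inE !negb_or !yz3_neq !(inj_eq z3_inj).
    move=> x; rewrite !inE => /or4P [] /eqP ->; by rewrite ?z3adj // e_sym a_adj.
  by rewrite !inE => /or4P [] /eqP ->; [left | right; eexists ..].
- have : t \in [:: y; z3 (0#4); z3 (1#4); z3 (3#4)].
    apply: (nbr_full (v := a (2#4))) => //.
      by rewrite /= !inE !negb_or !yz3_neq !(inj_eq z3_inj).
    move=> x; rewrite !inE => /or4P [] /eqP ->; by rewrite ?z3adj // e_sym a_adj.
  by rewrite !inE => /or4P [] /eqP ->; [left | right; eexists ..].
- have : t \in [:: y; z3 (0#4); z3 (1#4); z3 (2#4)].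
    apply: (nbr_full (v := a (3#4))) => //.
      by rewrite /= !inE !negb_or !yz3_neq !(inj_eq z3_inj).
    move=> x; rewrite !inE => /or4P [] /eqP ->; by rewrite ?z3adj // e_sym a_adj.
  by rewrite !inE => /or4P [] /eqP ->; [left | right; eexists ..].
Qed.

Variable w : T.
Hypotheses (w_adj : e (z3 (0#4)) w) (w_n : w \notin [:: a (1#4); a (2#4); a (3#4)]).

Lemma yw : e y w = false.
Proof.
apply/negP => /a_comp [m wm]; move: wm w_n w_adj; move: m; apply: ord4P => -> /=;
  rewrite ?inE ?eqxx ?orbT //.
by rewrite e_sym z3_nak.
Qed.

Lemma wz_gen i j k : (forall m : 'I_4, [|| m == 0#4, m == i, m == j | m == k]) ->
  0#4 != i -> 0#4 != j -> i != j -> i != k -> e w (z3 k).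
Proof.
move=> cov h0i h0j hij hik.
have ai0 : e (a i) (z3 (0#4)) by apply: z3adj; rewrite eq_sym.
have aiw : a i != w by apply/eqP => E; have := a_adj i; rewrite E yw.
have := @common_other (a i) (z3 (0#4)) w [:: z3 (0#4); z3 j] ai0 w_adj aiw.
rewrite c3 => /(_ isT) [v [vs aiv wv]].
case: (a3_comp aiv) => [vy | [m vm]].
  by move: wv; rewrite vy e_sym yw.
move: vs aiv wv; rewrite vm !inE !(inj_eq z3_inj) => /norP[m0 mj].
have := cov m; rewrite (negbTE m0) (negbTE mj) /= => /orP[/eqP -> | /eqP -> //].
by rewrite z3_nak.
Qed.

Lemma wz k : e w (z3 k).
Proof.
move: k; apply: ord4P.
- by rewrite e_sym.
- by apply: (@wz_gen (2#4) (3#4) (1#4)) => //; apply: ord4P.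
- by apply: (@wz_gen (1#4) (3#4) (2#4)) => //; apply: ord4P.
- by apply: (@wz_gen (1#4) (2#4) (3#4)) => //; apply: ord4P.
Qed.

Lemma yw_neq : y != w. Proof. by apply/eqP => E; have := wz (0#4); rewrite -E yz3. Qed.
Lemma aw_neq i : a i != w. Proof. by apply/eqP => E; have := a_adj i; rewrite E yw. Qed.
Lemma zw_neq k : z3 k != w.
Proof. by apply/eqP => E; have := wz (0#4); rewrite -E zz3. Qed.

Lemma c3_iso : isomorphic e (@hrel 10 EK55).
Proof.
apply: (@iso_list 9 EK55 y [:: y; a (0#4); a (1#4); a (2#4); a (3#4); z3 (0#4); z3 (1#4); z3 (2#4); z3 (3#4); w]).
- by vm_compute.
- by [].
- rewrite /= !inE !negb_or; repeat (apply/andP; split);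
  solve [ by [] | by rewrite (inj_eq a_inj) | by rewrite (inj_eq z3_inj) | by apply: neq_of_e
        | by apply: yz3_neq | by apply: az3_neq | by apply: yw_neq | by apply: aw_neq
        | by apply: zw_neq ].
- rewrite /=; repeat (apply/andP; split);
  solve [ by [] | by apply: a_adj | by apply: z3adj | by rewrite e_sym wz ].
Qed.
End C3.

Section C2.
Hypothesis c2 : c = 2.
Variables (y : T) (a : 'I_4 -> T).
Hypotheses (a_inj : injective a) (a_adj : forall i, e y (a i))
  (a_comp : forall x, e y x -> exists i, x = a i).

Lemma arcA2 i j : i != j -> two_arc e (a i) y (a j).
Proof. by move=> ij; split; [rewrite e_sym | | rewrite (inj_eq a_inj)]. Qed.

Definition z i j := odflt y [pick t | (t != y) && e (a i) t && e (a j) t].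

Lemma zP i j : i != j -> [/\ z i j != y, e (a i) (z i j) & e (a j) (z i j)].
Proof.
move=> ij; rewrite /z; case: pickP => [t /andP[/andP[? ?] ?] // | H].
have := @common_other (a i) y (a j) [:: y]; rewrite e_sym !a_adj (inj_eq a_inj) ij c2.
case=> // v [vs av bv]; move: (H v); rewrite av bv; rewrite inE in vs; by rewrite vs.
Qed.

Lemma zai i j : i != j -> e (a i) (z i j). Proof. by case/zP. Qed.
Lemma zaj i j : i != j -> e (a j) (z i j). Proof. by case/zP. Qed.
Lemma zy i j : i != j -> z i j != y. Proof. by case/zP. Qed.

Lemma zU i j t : i != j -> t != y -> e (a i) t -> e (a j) t -> t = z i j.
Proof.
move=> ij ty ait ajt; apply/eqP/negP => /negP tz.
have U3 : uniq [:: y; t; z i j] by rewrite /= !inE negb_or eq_sym ty eq_sym (zy ij) tz.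
have Hc : forall v, v \in [:: y; t; z i j] -> e (a i) v && e (a j) v.
  move=> v; rewrite !inE => /or3P [] /eqP ->; rewrite ?ait ?ajt ?zai ?zaj //.
  by rewrite !(e_sym (a _)) !a_adj.
have aiy : e (a i) y by rewrite e_sym a_adj.
have := common_le aiy (a_adj j) _ U3 Hc; rewrite (inj_eq a_inj) c2 => /(_ ij).
by [].
Qed.

Lemma zC i j : i != j -> z i j = z j i.
Proof.
move=> ij; have ji : j != i by rewrite eq_sym.
by apply: zU => //; [exact: zy | exact: zaj | exact: zai].
Qed.

Lemma yz i j : i != j -> e y (z i j) = false.
Proof. by move=> ij; apply: notri' (a_adj i) (zai ij). Qed.

Lemma a_comp2 i t : e (a i) t -> t != y -> exists m, m != i /\ t = z i m.
Proof.
move=> ait ty.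
have := @common_other t (a i) y [:: a i]; rewrite e_sym ait e_sym a_adj ty c2.
case=> // v [vs tv yv]; have [m vm] := a_comp yv.
have mi : m != i by apply: contraNneq vs => <-; rewrite vm inE.
exists m; split => //; apply: zU => //; first by rewrite eq_sym.
by rewrite -vm e_sym.
Qed.

Lemma az_idx m i j : i != j -> e (a m) (z i j) -> (m == i) || (m == j).
Proof.
move=> ij amz; apply/negPn/negP; rewrite negb_or => /andP[mi mj].
have U3 : uniq [:: a i; a j; a m].
  by rewrite /= !inE !negb_or !(inj_eq a_inj) ij ![_ == m]eq_sym mi mj.
have Hc : forall v, v \in [:: a i; a j; a m] -> e (z i j) v && e y v.
  move=> v; rewrite !inE => /or3P [] /eqP ->; by rewrite a_adj e_sym ?zai ?zaj ?amz.
have zai' : e (z i j) (a i) by rewrite e_sym zai.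
have aiy : e (a i) y by rewrite e_sym a_adj.
have := common_le zai' aiy (zy ij) U3 Hc; rewrite c2.
by [].
Qed.

Lemma zeq i j k l : i != j -> k != l -> z i j = z k l -> ((k == i) || (k == j)) && ((l == i) || (l == j)).
Proof.
move=> ij kl E; apply/andP; split; apply: az_idx => //; rewrite E ?zai ?zaj //.
Qed.

Lemma cover4 (i j k l : 'I_4) : uniq [:: i; j; k; l] -> forall n, [|| n == i, n == j, n == k | n == l].
Proof.
move=> U n; apply/negPn/negP => H.
have U5 : uniq [:: n; i; j; k; l] by rewrite cons_uniq U andbT !inE.
have := card_uniqP U5; move: (max_card (mem [:: n; i; j; k; l])); rewrite card_ord => H1 H2.
by rewrite H2 in H1.
Qed.

Lemma outer_neq_a m t : ~~ e y t -> a m != t.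
Proof. by move=> yt; apply: contraNneq yt => <-. Qed.

Lemma Xex i j m m' t : uniq [:: i; j; m; m'] -> ~~ e y t -> e (z i j) t ->
  e t (z i m) || e t (z i m').
Proof.
move=> U yt zt; have cov := cover4 U.
move: U; rewrite /= !inE !negb_or => /andP[/and3P[ij im im'] /andP[/andP[jm jm'] /andP[mm' _]]].
have := @common_other (a i) (z i j) t [:: z i j]; rewrite zai // zt outer_neq_a // c2.
case=> // v [vs av tv].
have vy : v != y by apply: contraNneq yt => <-; rewrite e_sym.
have [n [ni vn]] := a_comp2 av vy.
have nj : n != j by apply: contraNneq vs => nj; rewrite vn nj inE.
have := cov n; rewrite (negbTE ni) (negbTE nj) /= => /orP[] /eqP nE; by rewrite -nE -vn tv ?orbT.
Qed.

Lemma Xuniq i j m m' t : uniq [:: i; j; m; m'] -> ~~ e y t ->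
  e t (z i j) -> e t (z i m) -> e t (z i m') -> False.
Proof.
move=> U yt t1 t2 t3.
move: U; rewrite /= !inE !negb_or => /andP[/and3P[ij im im'] /andP[/andP[jm jm'] /andP[mm' _]]].
have n1 : z i j != z i m.
  by apply/eqP => /(zeq ij im) /andP[_ /orP[] /eqP E]; [move: im | move: jm]; rewrite E eqxx.
have n2 : z i j != z i m'.
  by apply/eqP => /(zeq ij im') /andP[_ /orP[] /eqP E]; [move: im' | move: jm']; rewrite E eqxx.
have n3 : z i m != z i m'.
  by apply/eqP => /(zeq im im') /andP[_ /orP[] /eqP E]; [move: im' | move: mm']; rewrite E eqxx.
have U3 : uniq [:: z i j; z i m; z i m'] by rewrite /= !inE !negb_or n1 n2 n3.
have Hc : forall v, v \in [:: z i j; z i m; z i m'] -> e (a i) v && e t v.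
  move=> v; rewrite !inE => /or3P [] /eqP ->; by rewrite zai // ?t1 ?t2 ?t3.
have zt : e (z i j) t by rewrite e_sym.
by have := common_le (zai ij) zt (outer_neq_a i yt) U3 Hc; rewrite c2.
Qed.

Lemma zzs i j k l s : i != j -> k != l -> ((s == i) || (s == j)) -> ((s == k) || (s == l)) ->
  e (z i j) (z k l) = false.
Proof.
move=> ij kl h1 h2.
have A1 : e (z i j) (a s) by rewrite e_sym; case/orP: h1 => /eqP ->; [exact: zai | exact: zaj].
have A2 : e (a s) (z k l) by case/orP: h2 => /eqP ->; [exact: zai | exact: zaj].
exact: notri' A1 A2.
Qed.

Lemma zz i j k l : i != j -> k != l -> e (z i j) (z k l) = false.
Proof.
move=> ij kl; apply/negP => H.
case: (boolP ((k == i) || (k == j))) => hk.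
  by move: H; rewrite (zzs ij kl hk) // eqxx.
case: (boolP ((l == i) || (l == j))) => hl.
  by move: H; rewrite (zzs ij kl hl) // eqxx orbT.
have U : uniq [:: i; j; k; l].
  move: hk hl; rewrite /= !inE !negb_or ij kl ![_ == i]eq_sym ![_ == j]eq_sym.
  by move=> /andP[-> ->] /andP[-> ->].
have := Xex U (negbT (yz kl)) H.
move: U; rewrite /= !inE !negb_or => /andP[/and3P[_ ik il] _].
move => /orP[] H2.
- by move: H2; rewrite e_sym (zzs ik kl (s := k)) // ?eqxx ?orbT.
- by move: H2; rewrite e_sym (zzs il kl (s := l)) // ?eqxx ?orbT.
Qed.

Lemma uq4 (i j k l : 'I_4) : i != j -> i != k -> i != l -> j != k -> j != l -> k != l ->
  uniq [:: i; j; k; l].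
Proof. by move=> ij ik il jk jl kl; rewrite /= !inE !negb_or ij ik il jk jl kl. Qed.

Lemma uq4E (i j k l : 'I_4) : uniq [:: i; j; k; l] ->
  [/\ i != j, i != k, i != l & [/\ j != k, j != l & k != l]].
Proof. by rewrite /= !inE !negb_or => /andP[/and3P[-> -> ->] /andP[/andP[-> ->] /andP[-> _]]]. Qed.

Lemma zneq i j k l : i != j -> k != l ->
  ~~ ((k == i) || (k == j)) || ~~ ((l == i) || (l == j)) -> z i j != z k l.
Proof.
move=> ij kl H; apply/eqP => /(zeq ij kl) /andP[h1 h2].
by move: H; rewrite h1 h2.
Qed.

Lemma out_nb i j t u : i != j -> ~~ e y t -> e (z i j) t -> e t u -> ~~ e y u.
Proof.
move=> ij yt zt tu; apply/negP => /a_comp [m um].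
have ty : t != y by apply: contraTneq zt => ->; rewrite e_sym yz.
have amt : e (a m) t by rewrite -um e_sym.
have [n [nm tE]] := a_comp2 amt ty.
by move: zt; rewrite tE zz // eq_sym.
Qed.

Lemma zo i j t : i != j -> e (z i j) t -> t \notin [:: a i; a j] -> ~~ e y t.
Proof.
move=> ij zt tn; apply/negP => /a_comp [m tm].
have amz : e (a m) (z i j) by rewrite -tm e_sym.
by move: tn; case/orP: (az_idx ij amz) => /eqP <-; rewrite tm !inE eqxx ?orbT.
Qed.

Lemma z_out2 i j : i != j -> exists t1 t2,
  [/\ t1 != t2, ~~ e y t1, ~~ e y t2, e (z i j) t1 & e (z i j) t2].
Proof.
move=> ij.
have [t1 [zt1 t1n]] := @nbr_other (z i j) [:: a i; a j] isT.
have [t2 [zt2 t2n]] := @nbr_other (z i j) [:: a i; a j; t1] isT.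
exists t1, t2; split => //.
- by apply: contraNneq t2n => ->; rewrite !inE eqxx !orbT.
- exact: zo zt1 t1n.
- by apply: (zo ij zt2); move: t2n; rewrite !inE !negb_or => /and3P[-> -> _].
Qed.

Lemma z_two i j t t' r : i != j -> t != t' -> ~~ e y t -> ~~ e y t' -> ~~ e y r ->
  e (z i j) t -> e (z i j) t' -> e (z i j) r -> (r == t) || (r == t').
Proof.
move=> ij tt' yt yt' yr zt zt' zr.
have : r \in [:: a i; a j; t; t'].
  apply: nbr_full zr => //.
    by rewrite /= !inE !negb_or (inj_eq a_inj) ij !(outer_neq_a _ yt) !(outer_neq_a _ yt') tt'.
  by move=> x; rewrite !inE => /or4P [] /eqP ->; rewrite // e_sym ?zai ?zaj.
by rewrite !inE => /or4P [] /eqP E; move: yr; rewrite E ?eqxx ?orbT // a_adj.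
Qed.

Lemma Xtwo i j k n t : i != j -> i != k -> j != k -> n != i -> ~~ e y t ->
  e t (z i j) -> e t (z i k) -> e t (z i n) -> (n == j) || (n == k).
Proof.
move=> ij ik jk ni yt h1 h2 h3; apply/negPn/negP; rewrite negb_or => /andP[nj nk].
by apply: (@Xuniq i j k n t) => //; apply: uq4; rewrite // eq_sym.
Qed.

Lemma common3 t t' p q r : t != t' -> e (z p.1 p.2) t -> p.1 != p.2 ->
  uniq [:: z p.1 p.2; q; r] ->
  e t (z p.1 p.2) -> e t q -> e t r -> e t' (z p.1 p.2) -> e t' q -> e t' r -> False.
Proof.
move=> tt' zt p12 U h1 h2 h3 g1 g2 g3.
have Hc : forall v, v \in [:: z p.1 p.2; q; r] -> e t v && e t' v.
  by move=> v; rewrite !inE => /or3P [] /eqP ->; apply/andP.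
have t'z : e (z p.1 p.2) t' by rewrite e_sym.
have := common_le h1 t'z tt' U Hc; rewrite c2. by [].
Qed.

Lemma Qcore i j k l t t' : uniq [:: i; j; k; l] -> ~~ e y t -> ~~ e y t' -> t != t' ->
  e t (z i j) -> e t (z i k) -> e t (z j k) ->
  e t' (z i j) -> e t' (z i k) -> e t' (z j l) -> False.
Proof.
move=> U yt yt' tt' t1 t2 t3 s1 s2 s3.
have [ij ik il [jk jl kl]] := uq4E U.
have [r1 [r2 [_ yr _ zr _]]] := z_out2 il.
have U' : uniq [:: i; l; j; k] by apply: uq4; rewrite // eq_sym.
have Ujkl : uniq [:: i; j; k; l] := U.
have bad u : e u (z i j) -> e u (z i k) -> e u (z i l) -> ~~ e y u -> False.
  by move=> h1 h2 h3 yu; apply: (@Xuniq i j k l u).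
case/orP: (Xex U' yr zr) => H.
- have := @z_two i j t t' r1 ij tt' yt yt' yr; rewrite !(e_sym (z _ _)) t1 s1 H.
  move=> /(_ isT isT isT) /orP[] /eqP E; move: zr; rewrite E e_sym => zr.
  + exact: bad t1 t2 zr yt.
  + exact: bad s1 s2 zr yt'.
- have := @z_two i k t t' r1 ik tt' yt yt' yr; rewrite !(e_sym (z _ _)) t2 s2 H.
  move=> /(_ isT isT isT) /orP[] /eqP E; move: zr; rewrite E e_sym => zr.
  + exact: bad t1 t2 zr yt.
  + exact: bad s1 s2 zr yt'.
Qed.
Lemma zneqA i j k l : i != j -> k != l -> i != k -> i != l -> z i j != z k l.
Proof.
move=> ij kl ik il; apply/eqP => /esym /(zeq kl ij) /andP[/orP[] /eqP E _].
- by move: ik; rewrite E eqxx.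
- by move: il; rewrite E eqxx.
Qed.

Lemma other_nb i j t : i != j -> ~~ e y t -> e (z i j) t ->
  exists t', [/\ t != t', ~~ e y t' & e (z i j) t'].
Proof.
move=> ij yt zt.
have [t1 [t2 [t12 y1 y2 z1 z2]]] := z_out2 ij.
case: (eqVneq t t1) => [E|h]; last by exists t1.
by exists t2; rewrite E.
Qed.

Lemma LemQ i j k l t : uniq [:: i; j; k; l] -> ~~ e y t ->
  e t (z i j) -> e t (z i k) -> e t (z j k) ->
  exists t', [/\ ~~ e y t', e t' (z i j), e t' (z i l) & e t' (z j l)].
Proof.
move=> U yt t1 t2 t3.
have [ij ik il [jk jl kl]] := uq4E U.
have ji : j != i by rewrite eq_sym.
have zt : e (z i j) t by rewrite e_sym.
have [t' [tt' yt' zt']] := other_nb ij yt zt.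
have s1 : e t' (z i j) by rewrite e_sym.
have X1 := Xex U yt' zt'.
have Uj : uniq [:: j; i; k; l] by apply: uq4; rewrite // eq_sym.
have X2 := Xex Uj yt' (etrans (congr1 (e^~ t') (esym (zC ij))) zt').
case/orP: X1 => a1; case/orP: X2 => a2.
- exfalso; apply: (@common3 t t' (i, j) (z i k) (z j k)) => //=.
  rewrite /= !inE !negb_or andbT (zneqA ij jk ij ik) (zneqA ik jk ij ik) andbT.
  by rewrite (zC ij) (zneqA ji ik ji jk).
- exfalso; exact: (Qcore U yt yt' tt' t1 t2 t3 s1 a1 a2).
- exfalso; apply: (@Qcore j i k l t t') => //; by rewrite -?(zC ij).
- by exists t'.
Qed.

Lemma LemC i j k l t : uniq [:: i; j; k; l] -> ~~ e y t ->
  e t (z i j) -> e t (z j k) -> e t (z k l) -> e t (z l i) ->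
  exists t', [/\ ~~ e y t', e t' (z i j), e t' (z j l), e t' (z l k) & e t' (z k i)].
Proof.
move=> U yt t1 t2 t3 t4.
have [ij ik il [jk jl kl]] := uq4E U.
have ji : j != i by rewrite eq_sym.
have ki : k != i by rewrite eq_sym.
have li : l != i by rewrite eq_sym.
have kj : k != j by rewrite eq_sym.
have lj : l != j by rewrite eq_sym.
have lk : l != k by rewrite eq_sym.
have t4' : e t (z i l) by rewrite (zC il).
have zt : e (z i j) t by rewrite e_sym.
have [t' [tt' yt' zt']] := other_nb ij yt zt.
have s1 : e t' (z i j) by rewrite e_sym.
have X1 := Xex U yt' zt'.
have Uj : uniq [:: j; i; k; l] := uq4 ji jk jl ik il kl.
have X2 := Xex Uj yt' (etrans (congr1 (e^~ t') (esym (zC ij))) zt').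
case/orP: X1 => a1; case/orP: X2 => a2.
-
  have Uq : uniq [:: i; j; k; l] := U.
  have [t'' [y'' h1 h2 h3]] := LemQ U yt' s1 a1 a2.
  have := @z_two i j t t' t'' ij tt' yt yt' y'' zt zt'; rewrite e_sym h1 => /(_ isT) /orP[] /eqP E.
  + exfalso; apply: (@Xuniq j i k l t (uq4 ji jk jl ik il kl) yt).
    * by rewrite -(zC ij).
    * exact: t2.
    * by rewrite -E.
  + by exfalso; apply: (@Xuniq i j k l t' U yt' s1 a1); rewrite -E.
-
  have Uk : uniq [:: k; i; j; l] := uq4 ki kj kl ij il jl.
  have zk : e (z k i) t' by rewrite (zC ki) e_sym.
  case/orP: (Xex Uk yt' zk) => a3.
    exfalso; apply: (@Xuniq j i l k t' (uq4 ji jl jk il ik lk) yt').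
    * by rewrite -(zC ij).
    * exact: a2.
    * by rewrite (zC jk).
  exists t'; split => //; first by rewrite (zC lk).
  by rewrite (zC ki).
-
  exfalso; apply: (@common3 t t' (i, j) (z i l) (z j k)) => //=.
  rewrite /= !inE !negb_or andbT (zneqA ij jk ij ik) andbT.
  rewrite (zneqA il jk ij ik) andbT.
  by rewrite (zC ij) (zneqA ji il ji jl).
-
  have Ul : uniq [:: i; j; l; k] := uq4 ij il ik jl jk lk.
  have [t'' [y'' h1 h2 h3]] := LemQ Ul yt' s1 a1 a2.
  have := @z_two i j t t' t'' ij tt' yt yt' y'' zt zt'; rewrite e_sym h1 => /(_ isT) /orP[] /eqP E.
  + by exfalso; apply: (@Xuniq i j k l t U yt t1 _ t4'); rewrite -E.
  + by exfalso; apply: (@Xuniq i j k l t' U yt' s1 _ a1); rewrite -E.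
Qed.

Lemma Ulem i j k t t' u : i != j -> i != k -> j != k -> ~~ e y t -> ~~ e y t' -> t != t' ->
  e t (z i j) -> e t (z i k) -> e t (z j k) -> e t' (z i j) -> e t u ->
  u != z i j -> u != z i k -> u != z j k -> e t' u.
Proof.
move=> ij ik jk yt yt' tt' t1 t2 t3 s1 tu u1 u2 u3.
have zt : e (z i j) t by rewrite e_sym.
have zt' : e (z i j) t' by rewrite e_sym.
have zu : z i j != u by rewrite eq_sym.
have := @common_other (z i j) t u [:: t] zt tu zu; rewrite c2 => /(_ isT) [v [vt zv uv]].
rewrite inE in vt.
case: (boolP (e y v)) => yv.
  have [m vm] := a_comp yv.
  have amz : e (a m) (z i j) by rewrite -vm e_sym.
  have uy : u != y by apply: contraNneq yt => <-; rewrite e_sym.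
  have amu : e (a m) u by rewrite -vm e_sym.
  have [n [nm un]] := a_comp2 amu uy.
  have tn : e t (z m n) by rewrite -un.
  case/orP: (az_idx ij amz) => /eqP mE; rewrite mE in nm tn un.
  - case/orP: (Xtwo ij ik jk nm yt t1 t2 tn) => /eqP nE; rewrite nE in un.
    + by rewrite un eqxx in u1.
    + by rewrite un eqxx in u2.
  - have ji : j != i by rewrite eq_sym.
    have t1' : e t (z j i) by rewrite -(zC ij).
    case/orP: (Xtwo ji jk ik nm yt t1' t3 tn) => /eqP nE; rewrite nE in un.
    + by rewrite un -(zC ij) eqxx in u1.
    + by rewrite un eqxx in u3.
have := @z_two i j t t' v ij tt' yt yt' yv zt zt' zv.
by rewrite (negbTE vt) /= => /eqP <-; rewrite e_sym.
Qed.

Lemma yneq_z i j t : i != j -> e t (z i j) -> y != t.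
Proof. by move=> ij tz; apply: contraTneq tz => <-; rewrite yz. Qed.

Lemma yneq2 t u : ~~ e y t -> e t u -> y != u.
Proof. by move=> yt tu; apply: contraNneq yt => ->; rewrite e_sym. Qed.

Lemma az_neq m i j : i != j -> a m != z i j.
Proof. by move=> ij; apply: contraTneq (a_adj m) => ->; rewrite yz. Qed.

Lemma zneqC i j k l : i != j -> k != l ->
  ((i != k) && (i != l)) || ((j != k) && (j != l)) -> z i j != z k l.
Proof.
move=> ij kl /orP[/andP[ik il] | /andP[jk jl]]; first exact: zneqA.
by rewrite (zC ij); apply: zneqA; rewrite // eq_sym.
Qed.

Lemma z_out_neq i j k l t : k != l -> i != j -> e t (z i j) -> z k l != t.
Proof. by move=> kl ij tz; apply: contraTneq tz => <-; rewrite zz. Qed.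

Lemma wneq i j k l t t' : uniq [:: i; j; k; l] -> ~~ e y t ->
  e t (z i j) -> e t (z i k) -> e t' (z i l) -> t != t'.
Proof. by move=> U yt h1 h2 h3; apply/eqP => E; rewrite -E in h3; apply: (Xuniq U yt h1 h2 h3). Qed.

Notation o0 := (0#4). Notation o1 := (1#4). Notation o2 := (2#4). Notation o3 := (3#4).

Lemma yneq_z' i j t : e t (z i j) -> i != j -> y != t.
Proof. by move=> tz ij; apply: yneq_z tz. Qed.
Lemma z_out_neq' i j k l t : e t (z i j) -> k != l -> i != j -> z k l != t.
Proof. by move=> tz kl ij; apply: z_out_neq tz. Qed.
Lemma ya_neq i : y != a i. Proof. exact: neq_of_e (a_adj i). Qed.

Ltac dq := first [ by []
 | by rewrite eq_sym
 | by rewrite (inj_eq a_inj)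
 | by apply: ya_neq
 | by apply: neq_of_e
 | by rewrite eq_sym; apply: neq_of_e
 | by apply: az_neq
 | by rewrite eq_sym; apply: az_neq
 | by rewrite eq_sym zy
 | by apply: zneqC
 | by apply: outer_neq_a
 | by apply: yneq_z'; [eassumption | ]
 | by apply: z_out_neq'; [eassumption | | ]
 | by rewrite eq_sym; apply: z_out_neq'; [eassumption | | ] ].

Ltac de := first [ by []
 | by apply: a_adj | by apply: zai | by apply: zaj | by rewrite e_sym ].

Section Q4W.
Variables w0 w1 w2 w3 u : T.
Hypotheses (y0 : ~~ e y w0) (y1 : ~~ e y w1) (y2 : ~~ e y w2) (y3 : ~~ e y w3).
Hypotheses (w3a : e w3 (z o0 o1)) (w3b : e w3 (z o0 o2)) (w3c : e w3 (z o1 o2)).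
Hypotheses (w2a : e w2 (z o0 o1)) (w2b : e w2 (z o0 o3)) (w2c : e w2 (z o1 o3)).
Hypotheses (w1a : e w1 (z o0 o2)) (w1b : e w1 (z o0 o3)) (w1c : e w1 (z o2 o3)).
Hypotheses (w0a : e w0 (z o1 o2)) (w0b : e w0 (z o1 o3)) (w0c : e w0 (z o2 o3)).
Hypotheses (w3u : e w3 u) (un : u \notin [:: z o0 o1; z o0 o2; z o1 o2]).

Lemma U0 : uniq [:: o0; o1; o2; o3]. Proof. by []. Qed.

Lemma n32 : w3 != w2. Proof. exact: (@wneq o0 o1 o2 o3). Qed.
Lemma n31 : w3 != w1. Proof. exact: (@wneq o0 o1 o2 o3). Qed.
Lemma n30 : w3 != w0. Proof. by apply: (@wneq o1 o0 o2 o3) => //; rewrite -zC. Qed.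
Lemma n21 : w2 != w1. Proof. exact: (@wneq o0 o1 o3 o2). Qed.
Lemma n20 : w2 != w0. Proof. by apply: (@wneq o1 o0 o3 o2) => //; rewrite -zC. Qed.
Lemma n10 : w1 != w0. Proof. by apply: (@wneq o2 o0 o3 o1) => //; rewrite -zC. Qed.

Lemma Q4_iso : isomorphic e (@hrel 16 EQ4).
Proof.
have yu : ~~ e y u.
  have zw : e (z o0 o1) w3 by rewrite e_sym.
  exact: (@out_nb o0 o1 w3 u).
move: un; rewrite !inE !negb_or => /and3P[u1 u2 u3].
have yu' : y != u := yneq2 y3 w3u.
have n32' := n32.
have n31' := n31.
have n30' := n30.
have n21' := n21.
have n20' := n20.
have n10' := n10.
have w2u : e w2 u by apply: (@Ulem o0 o1 o2 w3 w2 u).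
have w1u : e w1 u.
  by apply: (@Ulem o0 o2 o1 w3 w1 u) => //; rewrite ?(@zC o2 o1 isT).
have w0u : e w0 u.
  by apply: (@Ulem o1 o2 o0 w3 w0 u) => //; rewrite ?(@zC o1 o0 isT) ?(@zC o2 o0 isT).
have u4 : z o0 o3 != u.
  apply/eqP => E; have h : e w3 (z o0 o3) by rewrite E.
  exact: (@Xuniq o0 o1 o2 o3 w3).
have u5 : z o1 o3 != u.
  apply/eqP => E; have h : e w3 (z o1 o3) by rewrite E.
  by apply: (@Xuniq o1 o0 o2 o3 w3) => //; rewrite (@zC o1 o0 isT).
have u6 : z o2 o3 != u.
  apply/eqP => E; have h : e w3 (z o2 o3) by rewrite E.
  by apply: (@Xuniq o2 o0 o1 o3 w3) => //; rewrite ?(@zC o2 o0 isT) ?(@zC o2 o1 isT).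
apply: (@iso_list 15 EQ4 y [:: y; a o0; a o1; a o2; a o3; z o0 o1; z o0 o2; z o0 o3;
   z o1 o2; z o1 o3; z o2 o3; w0; w1; w2; w3; u]).
- by vm_compute.
- by [].
- rewrite /= !inE !negb_or; repeat (apply/andP; split); dq.
- rewrite /=; repeat (apply/andP; split); de.
Qed.
End Q4W.

Section BW.
Variables v1 v2 v3 : T.
Hypotheses (y1 : ~~ e y v1) (y2 : ~~ e y v2) (y3 : ~~ e y v3).
Hypotheses (v1a : e v1 (z o0 o1)) (v1b : e v1 (z o1 o2)) (v1c : e v1 (z o2 o3)) (v1d : e v1 (z o0 o3)).
Hypotheses (v2a : e v2 (z o0 o1)) (v2b : e v2 (z o1 o3)) (v2c : e v2 (z o2 o3)) (v2d : e v2 (z o0 o2)).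
Hypotheses (v3a : e v3 (z o0 o2)) (v3b : e v3 (z o1 o2)) (v3c : e v3 (z o1 o3)) (v3d : e v3 (z o0 o3)).

Lemma BCH_iso : isomorphic e (@hrel 14 EBCH).
Proof.
have n12 : v1 != v2 by apply: (@wneq o0 o1 o3 o2).
have n13 : v1 != v3 by apply: (@wneq o0 o1 o3 o2).
have n23 : v2 != v3 by apply: (@wneq o0 o1 o2 o3).
apply: (@iso_list 13 EBCH y [:: y; a o0; a o1; a o2; a o3; z o0 o1; z o0 o2; z o0 o3;
   z o1 o2; z o1 o3; z o2 o3; v3; v1; v2]).
- by vm_compute.
- by [].
- rewrite /= !inE !negb_or; repeat (apply/andP; split); dq.
- rewrite /=; repeat (apply/andP; split); de.
Qed.
End BW.

Lemma Qw t3 : ~~ e y t3 -> e t3 (z o0 o1) -> e t3 (z o0 o2) -> e t3 (z o1 o2) ->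
  isomorphic e (@hrel 16 EQ4).
Proof.
move=> y3 h1 h2 h3.
have [w2 [y2 a1 a2 a3]] := @LemQ o0 o1 o2 o3 t3 isT y3 h1 h2 h3.
have h3' : e t3 (z o2 o1) by rewrite (@zC o2 o1 isT).
have [w1 [y1 b1 b2 b3]] := @LemQ o0 o2 o1 o3 t3 isT y3 h2 h1 h3'.
have h1' : e t3 (z o1 o0) by rewrite (@zC o1 o0 isT).
have h2' : e t3 (z o2 o0) by rewrite (@zC o2 o0 isT).
have [w0 [y0 d1 d2 d3]] := @LemQ o1 o2 o0 o3 t3 isT y3 h3 h1' h2'.
have [u [tu un]] := @nbr_other t3 [:: z o0 o1; z o0 o2; z o1 o2] isT.
exact: (@Q4_iso w0 w1 w2 t3 u).
Qed.

Lemma Bw v2 : ~~ e y v2 -> e v2 (z o0 o1) -> e v2 (z o1 o3) -> e v2 (z o2 o3) -> e v2 (z o0 o2) ->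
  (exists v1, [/\ ~~ e y v1, e v1 (z o0 o1), e v1 (z o1 o2), e v1 (z o2 o3) & e v1 (z o0 o3)]) ->
  isomorphic e (@hrel 14 EBCH).
Proof.
move=> y2 h1 h2 h3 h4 [v1 [y1 g1 g2 g3 g4]].
have h3' : e v2 (z o3 o1) by rewrite (@zC o3 o1 isT).
have h1' : e v2 (z o1 o0) by rewrite (@zC o1 o0 isT).
have [v3 [y3 k1 k2 k3 k4]] := @LemC o0 o2 o3 o1 v2 isT y2 h4 h3 h3' h1'.
apply: (@BCH_iso v1 v2 v3) => //.
- by rewrite (@zC o1 o2 isT).
- by rewrite (@zC o0 o3 isT).
Qed.

Lemma C2_main : isomorphic e (@hrel 16 EQ4) \/ isomorphic e (@hrel 14 EBCH).
Proof.
have [p [_ [_ yp _ zp _]]] := @z_out2 o0 o1 isT.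
have X1 := @Xex o0 o1 o2 o3 p isT yp zp.
have zp' : e (z o1 o0) p by rewrite (@zC o1 o0 isT).
have X2 := @Xex o1 o0 o2 o3 p isT yp zp'.
have p1 : e p (z o0 o1) by rewrite e_sym.
case/orP: X1 => a1; case/orP: X2 => a2.
- left; apply: (@Qw p) => //.
-
  right.
  have zp2 : e (z o2 o0) p by rewrite (@zC o2 o0 isT) e_sym.
  case/orP: (@Xex o2 o0 o1 o3 p isT yp zp2) => a3.
    exfalso; apply: (@Xuniq o1 o0 o3 o2 p isT yp) => //; first by rewrite (@zC o1 o0 isT).
    by rewrite (@zC o1 o2 isT).
  have a3' : e p (z o3 o2) by rewrite (@zC o3 o2 isT).
  have [v1 [y1 g1 g2 g3 g4]] := @LemC o0 o1 o3 o2 p isT yp p1 a2 a3' (etrans (congr1 (e p) (@zC o2 o0 isT)) a1).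
  apply: (@Bw p) => //.
  exists v1; split => //.
  by rewrite (@zC o0 o3 isT).
-
  right.
  have zp2 : e (z o2 o1) p by rewrite (@zC o2 o1 isT) e_sym.
  case/orP: (@Xex o2 o1 o0 o3 p isT yp zp2) => a3.
    by exfalso; apply: (@Xuniq o0 o1 o3 o2 p isT yp) => //; rewrite (@zC o0 o2 isT).
  have a4 : e p (z o3 o0) by rewrite (@zC o3 o0 isT).
  have [v2 [y2 g1 g2 g3 g4]] := @LemC o0 o1 o2 o3 p isT yp p1 a2 a3 a4.
  apply: (@Bw v2) => //.
  - by rewrite (@zC o2 o3 isT).
  - by rewrite (@zC o0 o2 isT).
  - by exists p.
-
  left.
  have [t [yt h1 h2 h3]] := @LemQ o0 o1 o3 o2 p isT yp p1 a1 a2.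
  exact: (@Qw t).
Qed.
End C2.
End Girth4.

Lemma K5_case (x1 x2 x3 : T) : e x1 x2 -> e x2 x3 -> e x3 x1 -> isomorphic e (@hrel 5 EK5).
Proof.
move=> h12 h23 h31.
have arc0 : two_arc e x1 x2 x3 by split; rewrite // eq_sym; apply: neq_of_e.
have all2 p q r : two_arc e p q r -> e p r.
  move=> H; have [s [Hs <- _ <-]] := e_2at arc0 H.
  by rewrite Hs e_sym.
have [a [a_inj [a_comp a_adj]]] := nbrs x1.
have aa i j : i != j -> e (a i) (a j).
  by move=> ij; apply: (all2 _ x1); split; [rewrite e_sym | | rewrite (inj_eq a_inj)].
apply: (@iso_list 4 EK5 x1 [:: x1; a (0#4); a (1#4); a (2#4); a (3#4)]).
- by vm_compute.
- by [].
- rewrite /= !inE !negb_or; repeat (apply/andP; split);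
  first [ by [] | by rewrite (inj_eq a_inj) | by apply: neq_of_e ].
- by rewrite /= !a_adj !aa.
Qed.

End G.

Theorem lemma4p1 (T : finType) (e : rel T)
  (e_sym : symmetric e) (e_irr : irreflexive e)
  (e_conn : gconnected e) (e_val : regular e 4)
  (e_2at : two_arc_transitive e)
  (e_girth : exists g, girth e g /\ g <= 4) :
  (girth e 3 /\ isomorphic e K5_rel)
  \/ (girth e 4 /\ isomorphic e K44_rel /\ isomorphic e C41_rel)
  \/ (girth e 4 /\ (isomorphic e K55m_rel \/ isomorphic e Q4_rel
                    \/ isomorphic e BCH_rel)).
Proof.
move: e_girth => [g [Hg g4]]; have Hg' := Hg; move: Hg' => [[g3 [s [ss us cs]]] gmin].
have : (g == 3) || (g == 4).
  case: (ltngtP g 4) => [lt|gt|->]; last by rewrite orbT.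
    by rewrite eqn_leq g3 -ltnS lt.
  by rewrite leqNgt gt in g4.
case/orP => /eqP gE; rewrite gE in Hg ss gmin.
- left; split => //.
  case: s ss us cs => [|x1 [|x2 [|x3 [|? ?]]]] // _ _ /= /and4P[h12 h23 h31 _].
  apply: iso_trans isoK5; exact: (K5_case e_sym e_irr e_conn e_val e_2at h12 h23 h31).
- right.
  have notri : forall x y z, e x y -> e y z -> e x z -> False.
    move=> x y z xy yz xz; apply: (gmin 3 isT); split => //.
    exists [:: x; y; z]; split => //.
      rewrite /= !inE !negb_or !(neq_of_e e_irr) //.
    by rewrite /= xy yz e_sym xz.
  case: s ss us cs => [|p0 [|p1 [|p2 [|p3 [|? ?]]]]] // _ us /= /and5P[h01 h12 h23 h30 _].
  move: us; rewrite /= !inE !negb_or => /andP[/and3P[n01 n02 n03] /andP[/andP[n12 n13] /andP[n23 _]]].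
  have arc0 : two_arc e p0 p1 p2 by [].
  pose c := #|[set y | e p0 y] :&: [set y | e p2 y]|.
  have cdef : forall x u z, two_arc e x u z -> #|[set y | e x y] :&: [set y | e z y]| = c.
    by move=> x u z H; apply: (ccount e_2at arc0 H).
  have c2 : 1 < c.
    apply/card_gt1P; exists p1, p3; rewrite !inE h01 e_sym h12 e_sym h23 h30 /=.
    by split.
  have c4 : c <= 4.
    by rewrite -(e_val p0); apply: subset_leq_card; apply: subsetIl.
  have [a [a_inj [a_comp a_adj]]] := nbrs e_val p0.
  have : [|| c == 2, c == 3 | c == 4].
    by move: c2 c4; move: (c) => n; case: n => [|[|[|[|[|n]]]]].
  case/or3P => /eqP cE.
  + right; split => //; right.
    case: (C2_main e_sym e_irr e_conn e_val notri cdef cE a_inj a_adj a_comp) => H.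
      by left; apply: iso_trans H isoQ4.
    by right; apply: iso_trans H isoBCH.
  + right; split => //; left.
    have [w [wz wn]] := nbr_other e_val (@z3 T e p0 a (0#4)) (s := [:: a (1#4); a (2#4); a (3#4)]) isT.
    apply: iso_trans isoK55.
    exact: (c3_iso e_sym e_irr e_conn e_val notri cdef cE a_inj a_adj a_comp wz wn).
  + left; split => //.
    have [b [b_inj [_ b_adj]]] := nbrs e_val (a (0#4)).
    have H := c4_iso e_sym e_irr e_conn e_val cdef cE a_inj a_adj b_inj b_adj.
    by split; [apply: iso_trans H isoK44 | apply: iso_trans H isoC41].
Qed.
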